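(* Let $\{a_n\}_{n\in\mathbb Z}$ be i.i.d. random variables with values in $\{1,2,\dots\}$ with $\mathbb E[a_0]<\infty$, and let $N_0=\#\{m\in\mathbb Z: m<0,\ m+a_m>0\}+1$. Then for all $t\in\mathbb R$, $$\mathbb E[e^{tN_0}]=e^{t}\prod_{i=1}^{\infty}\left(e^{t}\,\mathbb P[a_0>i]+\mathbb P[a_0\le i]\right),$$ and $\mathbb E[e^{tN_0}]<\infty$ for all $t\in\mathbb R$. *)

(* Defs.v *)
From HB Require Import structures.
From mathcomp Require Import all_boot all_order all_algebra.
From mathcomp Require Import all_classical all_reals all_analysis.
Set Implicit Arguments. Unset Strict Implicit. Unset Printing Implicit Defensive.
Import Order.TTheory GRing.Theory Num.Theory.
Local Open Scope classical_set_scope.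
Local Open Scope ring_scope.

(* X : T -> nat is a (discrete) random variable: every level set is an event;
   hence every preimage X @^-1` B (B : set nat, a countable union) is an event. *)
Definition nat_rv d (T : measurableType d) (X : T -> nat) : Prop :=
  forall k : nat, measurable (X @^-1` [set k]).

Definition mutually_independent d (T : measurableType d) (R : realType)
  (P : probability T R) (a : int -> T -> nat) : Prop :=
  forall (s : seq int) (B : int -> set nat), uniq s ->
    P (\big[setI/setT]_(i <- s) (a i @^-1` B i)) =
    (\prod_(i <- s) P (a i @^-1` B i))%E.

Definition identically_distributed d (T : measurableType d) (R : realType)
  (P : probability T R) (a : int -> T -> nat) : Prop :=
  forall (n : int) (B : set nat), P (a n @^-1` B) = P (a 0 @^-1` B).

(* N_0 = #{ m in Z : m < 0, m + a_m > 0 } + 1, as an extended real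
   (the cardinality is counted with esum; it is +oo if the set is infinite). *)
Definition N0 d (T : measurableType d) (R : realType) (a : int -> T -> nat)
  (x : T) : \bar R :=
  ((\esum_(m in [set m : int | ((m < 0) /\ (0 < m + (a m x)%:Z))%R]) 1) + 1)%E.

(* Main.v *)
Require Import Defs.
From HB Require Import structures.
From mathcomp Require Import all_boot all_order all_algebra.
From mathcomp Require Import all_classical all_reals all_analysis.
From mathcomp Require Import zify ring lra measurable_realfun.
Import Order.TTheory GRing.Theory Num.Theory numFieldNormedType.Exports.
Local Open Scope classical_set_scope.
Local Open Scope ring_scope.
Set Implicit Arguments. Unset Strict Implicit. Unset Printing Implicit Defensive.
Local Open Scope ereal_scope.

Lemma prodEFin (R : realType) (I : Type) (r : seq I) (F : I -> R) :
  \prod_(i <- r) (F i)%:E = (\prod_(i <- r) F i)%R%:E.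
Proof. by elim: r => [|h r IH]; rewrite ?big_nil ?big_cons ?IH. Qed.

Lemma prod_indic (T : Type) (R : realType) (I : Type) (r : seq I) (F : I -> set T) x :
  (\prod_(i <- r) (\1_(F i) x : R))%R = \1_(\big[setI/setT]_(i <- r) F i) x.
Proof.
elim: r => [|h r IH]; first by rewrite !big_nil indicT.
by rewrite !big_cons IH indicI.
Qed.

Lemma natrv_pre d (T : measurableType d) (X : T -> nat) :
  nat_rv X -> forall B : set nat, measurable (X @^-1` B).
Proof.
move=> hX B.
have -> : X @^-1` B = \bigcup_k (if pselect (B k) then X @^-1` [set k] else set0).
  apply/seteqP; split => x /=.
    by move=> Bx; exists (X x) => //; case: pselect.
  by case=> k _; case: pselect => // Bk /= ->.
apply: bigcupT_measurable => k; case: pselect => Bk; [exact: hX|exact: measurable0].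
Qed.

Lemma natrv_mfun d (T : measurableType d) (R : realType) (X : T -> nat) (g : nat -> R) :
  nat_rv X -> measurable_fun setT (fun x => g (X x)).
Proof.
move=> hX _ Y mY; rewrite setTI.
exact: (natrv_pre hX (g @^-1` Y)).
Qed.

Lemma indic_nn (T : Type) (R : realType) (A : set T) x : (0 <= (\1_A x : R))%R.
Proof. by rewrite indicE ler0n. Qed.

Definition idx (i : nat) : int := (- (i.+1)%:Z)%R.
Definition ev (b : bool) (j : nat) : set nat :=
  if b then [set k | (j.+1 < k)%N] else [set k | (k <= j.+1)%N].
Definition Bf (n : nat) (f : {ffun 'I_n -> bool}) (m : int) : set nat :=
  match (insub (`|m|%N.-1) : option 'I_n) with Some i => ev (f i) i | None => setT end.

Lemma Bf_idx n (f : {ffun 'I_n -> bool}) (i : 'I_n) : Bf f (idx i) = ev (f i) i.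
Proof. by rewrite /Bf /idx abszN absz_nat /= valK. Qed.

Lemma idx_inj : injective idx.
Proof. by move=> i j; rewrite /idx => /eqP; rewrite eqr_opp eqz_nat eqSS => /eqP. Qed.

Definition cc (T : Type) (R : realType) (a : int -> T -> nat) (t : R) (i : nat) (x : T) : R :=
  if (i.+1 < a (idx i) x)%N then expR t else 1%R.
Definition ww (R : realType) (t : R) (b : bool) : R := if b then expR t else 1%R.
Definition pf d (T : measurableType d) (R : realType) (P : probability T R)
  (a : int -> T -> nat) (i : nat) (b : bool) : R :=
  if b then fine (P [set x | (i.+1 < a 0 x)%N]) else fine (P [set x | (a 0 x <= i.+1)%N]).
Definition Cf (T : Type) (a : int -> T -> nat) n (f : {ffun 'I_n -> bool}) : set T :=
  \big[setI/setT]_(m <- map (fun i : 'I_n => idx i) (index_enum 'I_n)) (a m @^-1` Bf f m).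

Lemma cc_expand (T : Type) (R : realType) (a : int -> T -> nat) (t : R) n x :
  (\prod_(i < n) cc a t i x =
   \sum_(f : {ffun 'I_n -> bool}) (\prod_(i < n) ww t (f i)) * \1_(Cf a f) x)%R.
Proof.
transitivity (\prod_(i < n) \sum_(b : bool)
   (ww t b * \1_(a (idx i) @^-1` ev b i) x))%R.
  apply: eq_bigr => i _; rewrite big_bool /= /cc /ww /ev !indicE.
  case: ltnP => h.
    rewrite (_ : x \in _ = true); last by apply/mem_set.
    rewrite (_ : x \in _ = false) ?mulr1 ?mulr0 ?addr0 //.
    by apply/negbTE/negP => /set_mem /=; rewrite leqNgt h.
  rewrite (_ : x \in _ = false); last first.
    by apply/negbTE/negP => /set_mem /=; rewrite ltnNge h.
  by rewrite (_ : x \in _ = true) ?mulr1 ?mulr0 ?add0r //; apply/mem_set.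
rewrite bigA_distr_bigA; apply: eq_bigr => f _; rewrite big_split /=; congr (_ * _)%R.
rewrite prod_indic /Cf big_map; congr (\1_ _ x).
by apply: eq_bigr => i _; rewrite Bf_idx.
Qed.

Lemma Cf_meas d (T : measurableType d) (a : int -> T -> nat) n (f : {ffun 'I_n -> bool}) :
  (forall m, nat_rv (a m)) -> measurable (Cf a f).
Proof. by move=> hr; apply: bigsetI_measurable => m _; exact: natrv_pre. Qed.

Lemma Cf_prob d (T : measurableType d) (R : realType) (P : probability T R)
  (a : int -> T -> nat) n (f : {ffun 'I_n -> bool}) :
  (forall m, nat_rv (a m)) -> mutually_independent P a -> identically_distributed P a ->
  P (Cf a f) = (\prod_(i < n) pf P a i (f i))%R%:E.
Proof.
move=> hr hi hd; rewrite /Cf hi; last first.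
  by rewrite map_inj_uniq ?index_enum_uniq // => i j /idx_inj /val_inj.
rewrite big_map -prodEFin; apply: eq_bigr => i _.
rewrite Bf_idx hd /pf /ev; case: (f i); rewrite fineK //; apply: fin_num_measure;
  [exact: (natrv_pre (hr 0%R) [set k | (i.+1 < k)%N])|exact: (natrv_pre (hr 0%R) [set k | (k <= i.+1)%N])].
Qed.

Lemma expect_prod d (T : measurableType d) (R : realType) (P : probability T R)
  (a : int -> T -> nat) (t : R) n :
  (forall m, nat_rv (a m)) -> mutually_independent P a -> identically_distributed P a ->
  \int[P]_x (expR t * \prod_(i < n) cc a t i x)%R%:E =
  (expR t * \prod_(i < n) (expR t * pf P a i true + pf P a i false))%R%:E.
Proof.
move=> hr hi hd.
under eq_fun do rewrite cc_expand mulr_sumr -sumEFin.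
rewrite ge0_integral_sum //; last first.
- move=> f x _; rewrite lee_fin mulr_ge0 ?expR_ge0 // mulr_ge0 ?indic_nn //.
  by apply: prodr_ge0 => i _; rewrite /ww; case: (f i); rewrite ?expR_ge0.
- move=> f; apply/measurable_realfun.measurable_EFinP; apply: measurable_realfun.measurable_funM; first exact: measurable_cst.
  apply: measurable_realfun.measurable_funM; first exact: measurable_cst.
  exact: (measurable_realfun.measurable_indic (Cf_meas f hr)).
have H (f : {ffun 'I_n -> bool}) : \int[P]_x (expR t * (\prod_(i < n) ww t (f i) * \1_(Cf a f) x))%R%:E =
   ((expR t * \prod_(i < n) ww t (f i)) * \prod_(i < n) pf P a i (f i))%R%:E.
  under eq_fun do rewrite mulrA EFinM.
  rewrite ge0_integralZl_EFin //.
  - rewrite integral_indic ?setIT //; last exact: Cf_meas.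
    rewrite [X in _ * X](_ : _ = (\prod_(i < n) pf P a i (f i))%R%:E) ?EFinM //.
    exact: (Cf_prob f hr hi hd).
  - exact/measurable_realfun.measurable_EFinP/(measurable_realfun.measurable_indic (Cf_meas f hr)).
  - by rewrite mulr_ge0 ?expR_ge0 //; apply: prodr_ge0 => i _; rewrite /ww; case: (f i); rewrite ?expR_ge0.
under eq_bigr do rewrite H.
rewrite sumEFin; congr (_%:E).
have E1 : (\prod_(i < n) (expR t * pf P a i true + pf P a i false) =
  \prod_(i < n) \sum_(b : bool) (ww t b * pf P a i b))%R.
  by apply: eq_bigr => i _; rewrite big_bool /ww /= mul1r.
rewrite E1 bigA_distr_bigA mulr_sumr; apply: eq_bigr => f _.
by rewrite -mulrA -big_split.
Qed.

Definition kk (T : Type) (a : int -> T -> nat) (n : nat) (x : T) : nat :=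
  (\sum_(i < n) (i.+1 < a (idx i) x)%N)%N.

Lemma kk_sum (T : Type) (R : realType) (a : int -> T -> nat) n x :
  \sum_(0 <= i < n | (i.+1 < a (idx i) x)%N) (1 : \bar R) = ((kk a n x)%:R : R)%:E.
Proof.
rewrite big_mkord /kk natr_sum -sumEFin big_mkcond /=.
by apply: eq_bigr => i _; case: ifP.
Qed.

Lemma esum_lim (T : Type) (R : realType) (a : int -> T -> nat) x :
  (fun n => ((kk a n x)%:R : R)%:E) @ \oo -->
  \esum_(m in [set m : int | ((m < 0) /\ (0 < m + (a m x)%:Z))%R]) (1 : \bar R).
Proof.
have S : [set m : int | ((m < 0) /\ (0 < m + (a m x)%:Z))%R] =
    idx @` [set i | (i.+1 < a (idx i) x)%N].
  apply/seteqP; split => m /=.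
    move=> [h1 h2]; exists (`|m|%N.-1).
      have -> : idx (`|m|%N.-1) = m by rewrite /idx; lia.
      by rewrite /=; lia.
    by rewrite /idx; lia.
  by case=> i /= h <-; rewrite /idx in h *; split; lia.
rewrite S esum_image; last by move=> i j _ _; exact: idx_inj.
rewrite -(@nneseries_esum R (fun _ => 1) (fun i => (i.+1 < a (idx i) x)%N)) //.
have -> : (fun n => ((kk a n x)%:R : R)%:E) =
    (fun n => \sum_(0 <= i < n | (i.+1 < a (idx i) x)%N) (1 : \bar R)).
  by apply/funext => n; rewrite kk_sum.
exact: is_cvg_nneseries_cond.
Qed.

Lemma cvgEF (R : realType) (f : nat -> R) (l : R) :
  f @ \oo --> l -> (fun n => (f n)%:E) @ \oo --> l%:E.
Proof. by move=> h; apply: cvg_EFin; [exact: nearW | exact: h]. Qed.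

Lemma expe_lim (R : realType) (t : R) (r : nat -> R) (l : \bar R) :
  0 <= l -> (fun n => (r n)%:E) @ \oo --> l ->
  (fun n => (expR (t * (r n + 1)))%:E) @ \oo --> expeR (t%:E * (l + 1)).
Proof.
case: l => [s| |] //= _ hr.
- have hr' : r @ \oo --> s.
    by move/fine_cvgP : hr => [_]; rewrite /comp /=.
  apply: cvgEF; apply: (cvg_comp _ expR); last exact: continuous_expR.
  by apply: cvgMr; apply: cvgD => //; exact: cvg_cst.
- move/cvgeryP : hr => hr.
  have [t0|t0|->] := ltgtP t 0%R.
  + rewrite addye // mulry ltr0_sg // mulN1e /=.
    have hx : (fun n => (- t * (r n + 1))%R) @ \oo --> +oo%R.
      apply/cvgryPge => A; near=> n.
      have hn : (A / - t <= r n)%R.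
        near: n. exact: (cvgry_ge hr).
      rewrite -(@ler_pM2l _ (- t)%R) ?oppr_gt0 // in hn.
      rewrite mulrCA mulfV ?mulr1 ?oppr_eq0 ?lt_eqF // in hn.
      by nra.
      Unshelve. all: end_near.
    have := cvg_comp _ _ hx (@cvgr_expR R).
    move=> h; apply: cvgEF; apply: cvg_trans h; apply: near_eq_cvg; apply: nearW => n /=.
    by rewrite mulNr opprK.
  + rewrite addye // mulry gtr0_sg // mul1e /=.
    apply/cvgeryP/cvgryPge => A; near=> n.
    have hn : (A / t <= r n)%R.
      near: n. exact: (cvgry_ge hr).
    rewrite -(@ler_pM2l _ t) // mulrCA mulfV ?mulr1 ?gt_eqF // in hn.
    have := expR_ge1Dx (t * (r n + 1))%R.
    by nra.
    Unshelve. all: end_near.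
  + rewrite mul0e expeR0 (_ : (fun n => _) = cst 1); first exact: cvg_cst.
    by apply/funext => n; rewrite mul0r expR0.
Qed.

Lemma prod_cc (T : Type) (R : realType) (a : int -> T -> nat) (t : R) n x :
  (\prod_(i < n) cc a t i x = expR t ^+ kk a n x)%R.
Proof.
elim: n => [|n IH]; first by rewrite big_ord0 /kk big_ord0 expr0.
rewrite big_ord_recr /= IH /kk big_ord_recr /= -/(kk a n x) /cc.
by case: ifP => _; [rewrite addn1 exprS mulrC | rewrite addn0 mulr1].
Qed.

Lemma fn_lim d (T : measurableType d) (R : realType) (a : int -> T -> nat) (t : R) x :
  (fun n => (expR t * \prod_(i < n) cc a t i x)%R%:E) @ \oo --> expeR (t%:E * N0 R a x).
Proof.
have -> : (fun n => (expR t * \prod_(i < n) cc a t i x)%R%:E) =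
    (fun n => (expR (t * ((kk a n x)%:R + 1)))%:E).
  apply/funext => n; rewrite prod_cc mulrDr mulr1 expRD -expRM_natr mulrC.
  by rewrite (mulrC t).
apply: expe_lim; first exact: esum_ge0.
exact: esum_lim.
Qed.

Lemma prod_meas d (T : measurableType d) (R : realType) (a : int -> T -> nat) (t : R) n :
  (forall m, nat_rv (a m)) ->
  measurable_fun setT (fun x => (expR t * \prod_(i < n) cc a t i x)%R%:E).
Proof.
move=> hr; apply/measurable_EFinP.
apply: (measurable_funM (measurable_cst _)).
elim: n => [|n IH].
  by under eq_fun do rewrite big_ord0; exact: measurable_cst.
under eq_fun do rewrite big_ord_recr /=.
exact: (measurable_funM IH (natrv_mfun (fun k => if (n.+1 < k)%N then expR t else 1%R) (hr _))).
Qed.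

Lemma kk_mono (T : Type) (a : int -> T -> nat) x :
  {homo (fun n => kk a n x) : n m / (n <= m)%N}.
Proof.
apply: homo_leq; [exact: leqnn | exact: leq_trans | move=> n].
by rewrite /kk big_ord_recr /= leq_addr.
Qed.

Lemma cnt_le k n : (\sum_(i < n) (i.+1 < k)%N <= k)%N.
Proof.
suff: (\sum_(i < n) (i.+1 < k)%N <= minn n k)%N.
  by move=> h; apply: leq_trans h (geq_minr _ _).
elim: n => [|n IH]; first by rewrite big_ord0.
rewrite big_ord_recr /=; move: IH; move: (\sum_(i < n) _)%N => S IH.
case: ltnP => h /=; lia.
Qed.

Lemma pf_ge0 d (T : measurableType d) (R : realType) (P : probability T R) a i b :
  (0 <= pf P a i b)%R.
Proof. by rewrite /pf; case: b; apply: fine_ge0; apply: measure_ge0. Qed.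

Lemma pf_false d (T : measurableType d) (R : realType) (P : probability T R) a i :
  nat_rv (a 0%R) -> pf P a i false = (1 - pf P a i true)%R.
Proof.
move=> hr; rewrite /pf.
have -> : [set x | (a 0%R x <= i.+1)%N] = ~` [set x | (i.+1 < a 0%R x)%N].
  apply/seteqP; split => x /=; first by rewrite leqNgt => /negP.
  by move=> h; rewrite leqNgt; apply/negP.
rewrite probability_setC; last exact: (natrv_pre hr [set k | (i.+1 < k)%N]).
rewrite fineB //; apply: fin_num_measure; exact: (natrv_pre hr [set k | (i.+1 < k)%N]).
Qed.

Lemma tail_bound d (T : measurableType d) (R : realType) (P : probability T R)
  (a : int -> T -> nat) n :
  (forall m, nat_rv (a m)) ->
  (\int[P]_x ((a 0%R x)%:R : R)%:E < +oo) ->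
  (\sum_(i < n) pf P a i true <= fine (\int[P]_x ((a 0%R x)%:R : R)%:E))%R.
Proof.
move=> hr hint.
have fin : \int[P]_x ((a 0%R x)%:R : R)%:E \is a fin_num.
  rewrite ge0_fin_numE // integral_ge0 // => x _; by rewrite lee_fin.
rewrite -lee_fin fineK //.
have E : (\sum_(i < n) pf P a i true)%R%:E =
    \int[P]_x (\sum_(i < n) (\1_([set x | (i.+1 < a 0%R x)%N]) x : R)%:E).
  rewrite ge0_integral_sum //; last first.
    move=> i; apply/measurable_EFinP; apply: measurable_indic.
    exact: (natrv_pre (hr 0%R) [set k | (i.+1 < k)%N]).
  rewrite -sumEFin; apply: eq_bigr => i _; rewrite integral_indic //; last first.
    exact: (natrv_pre (hr 0%R) [set k | (i.+1 < k)%N]).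
  rewrite setIT /pf /= fineK //; apply: fin_num_measure.
  exact: (natrv_pre (hr 0%R) [set k | (i.+1 < k)%N]).
rewrite E; apply: ge0_le_integral => //.
- by move=> x _; apply: sume_ge0 => i _; rewrite lee_fin indic_nn.
- apply: emeasurable_sum => i; apply/measurable_EFinP; apply: measurable_indic.
  exact: (natrv_pre (hr 0%R) [set k | (i.+1 < k)%N]).
- exact/measurable_EFinP/(natrv_mfun (fun k => (k%:R : R)) (hr 0%R)).
- move=> x _; rewrite sumEFin lee_fin.
  have -> : (\sum_(i < n) (\1_([set x | (i.+1 < a 0%R x)%N]) x : R) =
      (\sum_(i < n) (i.+1 < a 0%R x)%N)%:R)%R.
    rewrite natr_sum; apply: eq_bigr => i _; rewrite indicE; congr (_%:R).
    congr (nat_of_bool _); by apply/idP/idP => [/set_mem|h]; [|apply/mem_set].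
  by rewrite ler_nat cnt_le.
Qed.

Lemma u_bound d (T : measurableType d) (R : realType) (P : probability T R)
  (a : int -> T -> nat) (t : R) n :
  (forall m, nat_rv (a m)) ->
  (\int[P]_x ((a 0%R x)%:R : R)%:E < +oo) -> (0 <= t)%R ->
  (\prod_(i < n) (expR t * pf P a i true + pf P a i false) <=
   expR ((expR t - 1) * fine (\int[P]_x ((a 0%R x)%:R : R)%:E)))%R.
Proof.
move=> hr hint t0.
have e1 : (0 <= expR t - 1)%R by have := expR_ge1Dx t; lra.
apply: (@le_trans _ _ (\prod_(i < n) expR ((expR t - 1) * pf P a i true))%R).
  apply: ler_prod => i _; apply/andP; split.
    by rewrite addr_ge0 ?mulr_ge0 ?expR_ge0 ?pf_ge0.
  rewrite pf_false //.
  rewrite (_ : (_ + _ = 1 + (expR t - 1) * pf P a i true)%R); first exact: expR_ge1Dx.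
  by ring.
rewrite -expR_sum ler_expR -mulr_sumr; apply: ler_wpM2l => //.
exact: tail_bound.
Qed.

Local Close Scope ereal_scope.
Unset Implicit Arguments. Set Strict Implicit.

Theorem mainTheorem4 (d : measure_display) (T : measurableType d) (R : realType)
  (P : probability T R) (a : int -> T -> nat)
  (a_rv : forall n, nat_rv (a n))
  (a_indep : mutually_independent P a)
  (a_id : identically_distributed P a)
  (a_pos : forall n x, (0 < a n x)%N)
  (a_int : (\int[P]_x ((a 0 x)%:R : R)%:E < +oo)%E) :
  forall t : R,
    exists L : R,
      (fun n : nat => \prod_(1 <= i < n.+1)
          (expR t * fine (P [set x | (i < a 0 x)%N])
           + fine (P [set x | (a 0 x <= i)%N])) : R) @ \oo --> L /\
      (\int[P]_x expeR (t%:E * N0 R a x))%E = (expR t * L)%:E /\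
      (\int[P]_x expeR (t%:E * N0 R a x) < +oo)%E.
Proof.
move=> t.
set U := fun n : nat => \prod_(i < n) (expR t * pf P a i true + pf P a i false).
have uE : (fun n : nat => \prod_(1 <= i < n.+1)
          (expR t * fine (P [set x | (i < a 0 x)%N])
           + fine (P [set x | (a 0 x <= i)%N])) : R) = U.
  by apply/funext => n; rewrite big_add1 /= big_mkord.
rewrite uE.
set I := (\int[P]_x expeR (t%:E * N0 R a x))%E.
set fn := fun n x => (expR t * \prod_(i < n) cc a t i x)%:E.
have hA n : (\int[P]_x fn n x)%E = (expR t * U n)%:E by exact: expect_prod.
have hl x : fn ^~ x @ \oo --> expeR (t%:E * N0 R a x) by exact: fn_lim.
have mf n : measurable_fun setT (fn n) by exact: prod_meas.
have f0 n x : (0 <= fn n x)%E.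
  by rewrite lee_fin mulr_ge0 ?expR_ge0 // prod_cc exprn_ge0 // expR_ge0.
have hAf : (fun n => (expR t * U n)%:E) = (fun n => (\int[P]_x fn n x)%E).
  by apply/funext => n; rewrite hA.
have key : (fun n => (expR t * U n)%:E) @ \oo --> I /\ I \is a fin_num.
  rewrite hAf.
  have [t0|t0] := leP 0 t.
  - have nd x : {homo fn ^~ x : n m / (n <= m)%N >-> (n <= m)%E}.
      move=> n m nm; rewrite lee_fin /fn !prod_cc ler_wpM2l ?expR_ge0 //.
      apply: ler_weXn2l; first by have := expR_ge1Dx t; lra.
      exact: kk_mono.
    have := @cvg_monotone_convergence _ _ _ P _ measurableT _ mf (fun n x _ => f0 n x) (fun x _ => nd x).
    have -> : (fun x => limn (fn ^~ x)) = (fun x => expeR (t%:E * N0 R a x)).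
      by apply/funext => x; apply: cvg_lim => //; exact: hl.
    rewrite -/I => hc; split => //.
    have I0 : (0 <= I)%E by apply: integral_ge0 => x _; exact: expeR_ge0.
    rewrite ge0_fin_numE //.
    apply: (@le_lt_trans _ _ (expR t * expR ((expR t - 1) *
       fine (\int[P]_x ((a 0 x)%:R : R)%:E)))%:E); last exact: ltry.
    rewrite -(cvg_lim _ hc) //; apply: lime_le; first by apply/cvg_ex; exists I.
    apply: nearW => n; rewrite hA lee_fin ler_wpM2l ?expR_ge0 //.
    exact: u_bound.
  - have mF : measurable_fun setT (fun x => expeR (t%:E * N0 R a x)).
      exact: (emeasurable_fun_cvg _ _ mf (fun x _ => hl x)).
    have bd : (\forall x \ae P, forall n, setT x ->
        (`|fn n x| <= (EFin \o cst (expR t)) x)%E).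
      apply: aeW => x n _; rewrite gee0_abs // lee_fin /fn prod_cc /=.
      rewrite -[X in (_ <= X)%R]mulr1 ler_wpM2l ?expR_ge0 // exprn_ile1 ?expR_ge0 //.
      by rewrite expR_le1 ltW.
    have := dominated_convergence measurableT mf mF (aeW _ (fun x _ => hl x))
      (finite_measure_integrable_cst P (expR t) measurableT) bd.
    case=> ig _ hc; split; last exact: integrable_fin_num.
    exact: hc.
case: key => hc hfin.
have h1 : (fun n => expR t * U n) @ \oo --> fine I.
  by move: hc; rewrite -(fineK hfin) => /fine_cvgP [_]; rewrite /comp /=.
have hU : U @ \oo --> fine I / expR t.
  have -> : U = (fun n => expR t * U n * (expR t)^-1).
    by apply/funext => n; rewrite mulrAC divff ?mul1r // gt_eqF // expR_gt0.
  by apply: cvgM => //; exact: cvg_cst.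
exists (fine I / expR t); split => //; split.
  by rewrite mulrCA divff ?mulr1 ?fineK // gt_eqF // expR_gt0.
by rewrite ltey_eq hfin.
Qed.
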